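(* Let $s,t$ be planar trees and let $F_s^*,F_t^*$ be the dual basis elements in the graded dual $\mathrm{TSym}^*$ (whose product is the transpose of the coproduct $\Delta$ of $\mathrm{TSym}$). Then $$F_s^*\cdot F_t^*=\sum_{r:\ s\backslash t\ \le_{PT}\ r\ \le_{PT}\ s/t}F_r^*.$$
   Context: A planar tree is a rooted tree in which the children of each node are linearly ordered and every node has either no children (a leaf) or at least two children (an internal node); the one-leaf tree is allowed. If $t$ has $n+1$ leaves, $\deg t=n$; $\mathrm{ideg}(t)$ is the number of internal nodes; leaves are numbered $1,\dots,n+1$ from left to right. For $0\le i\le n$, with $P$ the path from the root to leaf $i+1$: ${}^it$ is obtained by deleting, at each internal node $v$ on $P$, the children of $v$ strictly to the right of the child on $P$ (with their subtrees) and then contracting every node with exactly one child; $t^i$ likewise deleting the children strictly to the left. The splitting is allowable if $\mathrm{ideg}({}^it)+\mathrm{ideg}(t^i)=\mathrm{ideg}(t)$. $\mathrm{TSym}$ has basis $\{F_t\}$ indexed by planar trees, with coproduct $\Delta(F_t)=\sum F_{{}^it}\otimes F_{t^i}$ over $0\le i\le\deg t$ with allowable splitting. $s/t$ is the tree obtained by identifying the root of $s$ with the leftmost leaf of $t$; $s\backslash t$ is obtained by identifying the root of $t$ with the rightmost leaf of $s$. Planar Tamari order: let $x$ be an internal node of a tree $s$ whose rightmost child $y$ is internal, with children of $x$ being $c_1,\dots,c_{a-1},y$ ($a\ge2$) and children of $y$ being $d_1,\dots,d_{b+1}$ ($b\ge1$), left to right. The left rotation of $s$ at $x$ replaces the subtree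 at $x$ by a node whose children are $z,d_2,\dots,d_{b+1}$, where $z$ is a new node with children $c_1,\dots,c_{a-1},d_1$ (all subtrees below these kept). The planar Tamari order $\le_{PT}$ on trees of a given degree is the reflexive–transitive closure of the relation ''$t$ is a left rotation of $s$''. *)

(* Defs.v *)
From Stdlib Require Import Relations.
From HB Require Import structures.
From mathcomp Require Import all_boot.
Set Implicit Arguments. Unset Strict Implicit. Unset Printing Implicit Defensive.

(* Planar rooted trees: a node is a leaf or has an ordered list of children.
   Well-formedness (every internal node has >= 2 children) is the predicate [wf]. *)
Inductive ptree := Leaf | Node of seq ptree.

Fixpoint ptree_eqb (s t : ptree) : bool :=
  match s, t with
  | Leaf, Leaf => true
  | Node cs, Node ds =>
      (fix go (cs ds : seq ptree) : bool :=
         match cs, ds with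
         | [::], [::] => true
         | c :: cs', d :: ds' => ptree_eqb c d && go cs' ds'
         | _, _ => false
         end) cs ds
  | _, _ => false
  end.

Lemma ptree_eqbP : forall s t : ptree, reflect (s = t) (ptree_eqb s t).
Proof.
fix IH 1 => s t; case: s => [|cs]; case: t => [|ds] /=; try by constructor.
have H : reflect (cs = ds)
  ((fix go (cs ds : seq ptree) : bool :=
      match cs, ds with
      | [::], [::] => true
      | c :: cs', d :: ds' => ptree_eqb c d && go cs' ds'
      | _, _ => false
      end) cs ds).
  elim: cs ds => [|c cs IHc] [|d ds] /=; try by constructor.
  case: (IH c d) => [->|Hne] /=; last by constructor => -[].
  by case: (IHc ds) => [->|Hne]; constructor => // -[].
by case: H => [->|Hne]; constructor => // -[].
Qed.

HB.instance Definition _ := hasDecEq.Build ptree ptree_eqbP.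

Fixpoint wf (t : ptree) : bool :=
  match t with
  | Leaf => true
  | Node cs => (1 < size cs) &&
      (fix go (cs : seq ptree) : bool :=
         match cs with [::] => true | c :: cs' => wf c && go cs' end) cs
  end.

Fixpoint nleaves (t : ptree) : nat :=
  match t with
  | Leaf => 1
  | Node cs =>
      (fix go (cs : seq ptree) : nat :=
         match cs with [::] => 0 | c :: cs' => nleaves c + go cs' end) cs
  end.

Definition deg (t : ptree) : nat := (nleaves t).-1.

Fixpoint ideg (t : ptree) : nat :=
  match t with
  | Leaf => 0
  | Node cs =>
      (fix go (cs : seq ptree) : nat :=
         match cs with [::] => 1 | c :: cs' => ideg c + go cs' end) cs
  end.

(* Leaves are indexed 0,1,...,deg t from the left; index i is leaf number i+1.
   [lsplit t i] = ^i t : at each node of the path to leaf i, delete the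
   children strictly right of the path child, contracting unary nodes.
   [acc] holds the children strictly left of the current one. *)
Fixpoint lsplit (t : ptree) (i : nat) : ptree :=
  match t with
  | Leaf => Leaf
  | Node cs =>
      (fix go (cs acc : seq ptree) (i : nat) : ptree :=
         match cs with
         | [::] => Leaf
         | c :: cs' =>
             if i < nleaves c then
               (if acc is [::] then lsplit c i else Node (rcons acc (lsplit c i)))
             else go cs' (rcons acc c) (i - nleaves c)
         end) cs [::] i
  end.

(* [rsplit t i] = t^i : delete the children strictly left of the path child. *)
Fixpoint rsplit (t : ptree) (i : nat) : ptree :=
  match t with
  | Leaf => Leaf
  | Node cs =>
      (fix go (cs : seq ptree) (i : nat) : ptree :=
         match cs with
         | [::] => Leaf
         | c :: cs' =>
             if i < nleaves c then
               (if cs' is [::] then rsplit c i else Node (rsplit c i :: cs'))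
             else go cs' (i - nleaves c)
         end) cs i
  end.

Definition allowable (t : ptree) (i : nat) : bool :=
  ideg (lsplit t i) + ideg (rsplit t i) == ideg t.

(* Coefficient of F_s (x) F_t in Delta(F_r); by duality it is the coefficient
   of F_r^* in the product F_s^* . F_t^* of the graded dual TSym^*. *)
Definition dual_prod_coeff (s t r : ptree) : nat :=
  count (fun i => [&& allowable r i, lsplit r i == s & rsplit r i == t])
        (iota 0 (deg r).+1).

(* s/t : root of s identified with the leftmost leaf of t *)
Fixpoint graft_over (s t : ptree) : ptree :=
  match t with
  | Leaf => s
  | Node [::] => Node [::]
  | Node (c :: cs) => Node (graft_over s c :: cs)
  end.

(* s\t : root of t identified with the rightmost leaf of s *)
Fixpoint graft_under (s t : ptree) : ptree :=
  match s with
  | Leaf => t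
  | Node cs =>
      Node ((fix go (cs : seq ptree) : seq ptree :=
         match cs with
         | [::] => [::]
         | [:: c] => [:: graft_under c t]
         | c :: cs' => c :: go cs'
         end) cs)
  end.

(* [lrot s t] : t is a left rotation of s (at the root, or inside a subtree).
   At the root: x has children c_1..c_{a-1}, y (a >= 2, i.e. cs <> [::]),
   y has children d_1..d_{b+1} (b >= 1, i.e. ds <> [::]); the result has
   children z, d_2..d_{b+1} where z has children c_1..c_{a-1}, d_1. *)
Inductive lrot : ptree -> ptree -> Prop :=
  | lrot_root (cs : seq ptree) (d1 : ptree) (ds : seq ptree) :
      cs <> [::] -> ds <> [::] ->
      lrot (Node (rcons cs (Node (d1 :: ds)))) (Node (Node (rcons cs d1) :: ds))
  | lrot_sub (cs1 : seq ptree) (c c' : ptree) (cs2 : seq ptree) :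
      lrot c c' -> lrot (Node (cs1 ++ c :: cs2)) (Node (cs1 ++ c' :: cs2)).

Definition le_PT : ptree -> ptree -> Prop := clos_refl_trans ptree lrot.

(* Main.v *)
Require Import Defs.
From HB Require Import structures.
From Stdlib Require Import Relations.
From mathcomp Require Import all_boot zify.
Set Implicit Arguments. Unset Strict Implicit. Unset Printing Implicit Defensive.

Lemma ptree_ind2 (P : ptree -> Prop) :
  P Leaf -> (forall cs, (forall c, c \in cs -> P c) -> P (Node cs)) ->
  forall t, P t.
Proof.
move=> HL HN; fix IH 1 => t; case: t => [|cs]; first exact: HL.
apply: HN; elim: cs => [|d ds IHd] c; first by rewrite in_nil => F; exact: (False_ind _ (notF F)).
rewrite inE => /orP[/eqP->|]; last exact: IHd.
exact: IH.
Qed.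

Notation L cs := (sumn (map nleaves cs)).

Lemma nleavesE cs : nleaves (Node cs) = L cs.
Proof. by elim: cs => //= c cs ->. Qed.
Lemma idegE cs : ideg (Node cs) = (sumn (map ideg cs)).+1.
Proof. by elim: cs => //= c cs ->; rewrite addnS. Qed.
Lemma wfE cs : wf (Node cs) = (1 < size cs) && all wf cs.
Proof. by rewrite /=; congr (_ && _); elim: cs => //= c cs ->. Qed.

Definition lgo := (fix go (cs acc : seq ptree) (i : nat) : ptree :=
         match cs with
         | [::] => Leaf
         | c :: cs' =>
             if i < nleaves c then
               (if acc is [::] then lsplit c i else Node (rcons acc (lsplit c i)))
             else go cs' (rcons acc c) (i - nleaves c)
         end).
Lemma lsplitE cs i : lsplit (Node cs) i = lgo cs [::] i. Proof. by []. Qed.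
Definition rgo := (fix go (cs : seq ptree) (i : nat) : ptree :=
         match cs with
         | [::] => Leaf
         | c :: cs' =>
             if i < nleaves c then
               (if cs' is [::] then rsplit c i else Node (rsplit c i :: cs'))
             else go cs' (i - nleaves c)
         end).
Lemma rsplitE cs i : rsplit (Node cs) i = rgo cs i. Proof. by []. Qed.

Lemma lgo_dec a c b j acc : j < nleaves c ->
  lgo (a ++ c :: b) acc (L a + j) =
  if acc ++ a is [::] then lsplit c j else Node (rcons (acc ++ a) (lsplit c j)).
Proof.
move=> Hj; elim: a acc => [|x a IH] acc /=; first by rewrite Hj cats0.
rewrite ifN; last by lia.
have -> : nleaves x + L a + j - nleaves x = L a + j by lia.
rewrite IH -cats1 -catA /=.
by case: acc.
Qed.

Lemma lsplit_dec a c b j : j < nleaves c ->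
  lsplit (Node (a ++ c :: b)) (L a + j) =
  if a is [::] then lsplit c j else Node (rcons a (lsplit c j)).
Proof. by move=> Hj; rewrite lsplitE lgo_dec. Qed.

Lemma rsplit_dec a c b j : j < nleaves c ->
  rsplit (Node (a ++ c :: b)) (L a + j) =
  if b is [::] then rsplit c j else Node (rsplit c j :: b).
Proof.
move=> Hj; rewrite rsplitE; elim: a => [|x a IH] /=; first by rewrite Hj.
rewrite ifN; last by lia.
by have -> : nleaves x + L a + j - nleaves x = L a + j by lia.
Qed.

Lemma lgo_out cs acc i : L cs <= i -> lgo cs acc i = Leaf.
Proof.
elim: cs acc i => [|x cs IH] acc i //= H.
rewrite ifN; last by lia.
apply: IH; lia.
Qed.
Lemma lsplit_out cs i : L cs <= i -> lsplit (Node cs) i = Leaf.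
Proof. exact: lgo_out. Qed.
Lemma rsplit_out cs i : L cs <= i -> rsplit (Node cs) i = Leaf.
Proof.
rewrite rsplitE; elim: cs i => [|x cs IH] i //= H.
rewrite ifN; last by lia.
apply: IH; lia.
Qed.

Lemma decomp cs i : i < L cs ->
  exists a c b j, [/\ cs = a ++ c :: b, i = L a + j & j < nleaves c].
Proof.
elim: cs i => [|x cs IH] i //= H.
case: (ltnP i (nleaves x)) => Hx.
  by exists [::], x, cs, i.
have [a [c [b [j [E1 E2 E3]]]]] := IH (i - nleaves x) ltac:(lia).
exists (x :: a), c, b, j; split => //=; [by rewrite E1 | lia].
Qed.
Arguments nleaves : simpl never.
Arguments ideg : simpl never.
Arguments lsplit : simpl never.
Arguments rsplit : simpl never.
Arguments wf : simpl never.


Fixpoint psize (t : ptree) : nat :=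
  match t with Leaf => 1 | Node cs => (sumn (map psize cs)).+1 end.
Fixpoint gm (t : ptree) : nat :=
  match t with Leaf => 0
  | Node cs => (if cs is c :: _ then psize c else 0) + sumn (map gm cs) end.

Lemma psumn_rcons (f : ptree -> nat) cs x : sumn (map f (rcons cs x)) = sumn (map f cs) + f x.
Proof. by rewrite map_rcons -cats1 sumn_cat /= addn0. Qed.
Lemma psumn_cat3 (f : ptree -> nat) a c b : sumn (map f (a ++ c :: b)) = sumn (map f a) + f c + sumn (map f b).
Proof. by rewrite map_cat sumn_cat /= addnA. Qed.

Lemma lrot_inv u v : lrot u v ->
  [/\ psize u = psize v, nleaves u = nleaves v, ideg u = ideg v & gm u < gm v].
Proof.
elim=> {u v} [cs d1 ds Hcs Hds | cs1 c c' cs2 _ [E1 E2 E3 E4]].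
  case: cs Hcs => [//|c0 cs] _.
  rewrite !nleavesE !idegE /= !psumn_rcons /= !nleavesE !idegE /= !psumn_rcons; split; lia.
rewrite !nleavesE !idegE /= !psumn_cat3 E1 E2 E3; split => //.
case: cs1 => [|x cs1] /=; rewrite ?psumn_cat3 /=; lia.
Qed.

Lemma le_PT_gm u v : le_PT u v -> gm u <= gm v.
Proof.
elim=> // [x y /lrot_inv[_ _ _ H]|x y z _ H1 _ H2]; lia.
Qed.

Lemma le_PT_inv u v : le_PT u v -> [/\ psize u = psize v, nleaves u = nleaves v & ideg u = ideg v].
Proof.
elim=> // [x y /lrot_inv[? ? ? _]|x y z _ [? ? ?] _ [? ? ?]]; split; congruence.
Qed.

Lemma le_PT_antisym u v : le_PT u v -> le_PT v u -> u = v.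
Proof.
move=> /clos_rt_rt1n_iff H; case: H => // w y Hw Hy /le_PT_gm H2.
have := le_PT_gm (clos_rt1n_rt _ _ _ _ Hy); have [_ _ _ H3] := lrot_inv Hw; lia.
Qed.

Lemma le_PT_ctx cs1 cs2 x y : le_PT x y -> le_PT (Node (cs1 ++ x :: cs2)) (Node (cs1 ++ y :: cs2)).
Proof.
elim=> [a b H|a|a b c _ H1 _ H2]; first by apply: rt_step; constructor.
  exact: rt_refl.
exact: rt_trans H1 H2.
Qed.

Lemma lrot_le u v : lrot u v -> le_PT u v. Proof. exact: rt_step. Qed.


Lemma ls_nil c b j : j < nleaves c -> lsplit (Node (c :: b)) j = lsplit c j.
Proof. by move=> H; have := lsplit_dec [::] b H. Qed.
Lemma ls_cons a c b j : a <> [::] -> j < nleaves c ->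
  lsplit (Node (a ++ c :: b)) (L a + j) = Node (rcons a (lsplit c j)).
Proof. by case: a => // x a _ H; rewrite lsplit_dec. Qed.
Lemma rs_nil a c j : j < nleaves c -> rsplit (Node (a ++ [:: c])) (L a + j) = rsplit c j.
Proof. by move=> H; rewrite rsplit_dec. Qed.
Lemma rs_cons a c b j : b <> [::] -> j < nleaves c ->
  rsplit (Node (a ++ c :: b)) (L a + j) = Node (rsplit c j :: b).
Proof. by case: b => // x b _ H; rewrite rsplit_dec. Qed.
Lemma rs_cons0 c b j : b <> [::] -> j < nleaves c ->
  rsplit (Node (c :: b)) j = Node (rsplit c j :: b).
Proof. by move=> Hb H; have := rs_cons [::] Hb H. Qed.

Lemma L_rcons cs x : L (rcons cs x) = L cs + nleaves x.
Proof. exact: psumn_rcons. Qed.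
Lemma L_cat3 a c b : L (a ++ c :: b) = L a + nleaves c + L b.
Proof. exact: psumn_cat3. Qed.

Lemma rcons_nn (b : seq ptree) x : rcons b x <> [::]. Proof. by case: b. Qed.
Lemma cons_nn (b : seq ptree) x : x :: b <> [::]. Proof. by []. Qed.
Lemma cat_cons_nn (a b : seq ptree) x : a ++ x :: b <> [::]. Proof. by case: a. Qed.
Hint Resolve rcons_nn cons_nn cat_cons_nn : core.

Lemma mono u v : lrot u v -> forall i,
  le_PT (lsplit u i) (lsplit v i) /\ le_PT (rsplit u i) (rsplit v i).
Proof.
elim=> {u v} [cs d1 ds Hcs Hds | cs1 c c' cs2 Hc IH] i.
- set y := Node (d1 :: ds); set z := Node (rcons cs d1).
  have nly : nleaves y = nleaves d1 + L ds by rewrite /y nleavesE.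
  have nlz : nleaves z = L cs + nleaves d1 by rewrite /z nleavesE L_rcons.
  case: (ltnP i (L cs)) => H1.
    have [a [c [b [j [E1 E2 E3]]]]] := decomp H1.
    have Hz : i < nleaves z by lia.
    rewrite ls_nil // rs_cons0 // /z /y E1 !rcons_cat /= E2 !lsplit_dec // !rs_cons //.
    split; first exact: rt_refl.
    apply: lrot_le; exact: (@lrot_root (rsplit c j :: b) d1 ds).
  case: (ltnP i (L cs + nleaves d1)) => H2.
    have [j Ej] : exists j, i = L cs + j by exists (i - L cs); lia.
    subst i.
    have Hz : L cs + j < nleaves z by lia.
    have Hy : j < nleaves y by lia.
    have Hd : j < nleaves d1 by lia.
    rewrite ls_nil // rs_cons0 // /z -!cats1 ls_cons // rs_nil //.
    rewrite ls_cons // rs_nil // /y ls_nil // rs_cons0 //.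
    split; exact: rt_refl.
  case: (ltnP i (L cs + nleaves d1 + L ds)) => H3.
    have Hk : i - L cs - nleaves d1 < L ds by lia.
    have [a [c [b [j [E1 E2 E3]]]]] := decomp Hk.
    have Eu : i = L cs + (L (d1 :: a) + j) by rewrite /=; lia.
    have Ev : i = L (z :: a) + j by rewrite /= nlz; lia.
    have Hy : L (d1 :: a) + j < nleaves y by rewrite /= nly E1 L_cat3; lia.
    split.
      rewrite {1}Eu -cats1 ls_cons // /y E1 -/(cat (d1 :: a) (c :: b)) ls_cons //.
      rewrite Ev -/(cat (z :: a) (c :: b)) ls_cons //=.
      apply: lrot_le; exact: (@lrot_root cs d1 (rcons a (lsplit c j))).
    rewrite {1}Eu -cats1 rs_nil // /y E1 -/(cat (d1 :: a) (c :: b)) rsplit_dec //.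
    rewrite Ev -/(cat (z :: a) (c :: b)) rsplit_dec //; exact: rt_refl.
  have Hu : L (rcons cs y) <= i by rewrite L_rcons nly; lia.
  have Hv : L (z :: ds) <= i by rewrite /= nlz; lia.
  rewrite !lsplit_out // !rsplit_out //; split; exact: rt_refl.
- have [_ Enl _ _] := lrot_inv Hc.
  case: (ltnP i (L cs1)) => H1.
    have [a [e [b [j [E1 E2 E3]]]]] := decomp H1.
    rewrite E1 E2 -!catA !lsplit_dec // !rs_cons //.
    split; first exact: rt_refl.
    apply: lrot_le; exact: (@lrot_sub (rsplit e j :: b) c c' cs2).
  case: (ltnP i (L cs1 + nleaves c)) => H2.
    have [j Ej] : exists j, i = L cs1 + j by exists (i - L cs1); lia.
    subst i.
    have Hj : j < nleaves c by lia.
    have Hj' : j < nleaves c' by lia.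
    rewrite !lsplit_dec // !rsplit_dec //.
    have [IH1 IH2] := IH j.
    split.
      case: cs1 {H1 H2} => [|x cs1] //.
      by rewrite -!cats1; apply: le_PT_ctx.
    case: cs2 => [|x cs2] //.
    exact: (le_PT_ctx [::]).
  case: (ltnP i (L cs1 + nleaves c + L cs2)) => H3.
    have Hk : i - L cs1 - nleaves c < L cs2 by lia.
    have [a [e [b [j [E1 E2 E3]]]]] := decomp Hk.
    have Eu : i = L (cs1 ++ c :: a) + j by rewrite L_cat3; lia.
    have Ev : i = L (cs1 ++ c' :: a) + j by rewrite L_cat3; lia.
    rewrite E1.
    have R1 : forall x : ptree, cs1 ++ x :: a ++ e :: b = (cs1 ++ x :: a) ++ e :: b by move=> x; rewrite -catA.
    rewrite !R1 {1 3}Eu Ev ls_cons // ls_cons // !rsplit_dec //.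
    split; last exact: rt_refl.
    rewrite !rcons_cat /=.
    apply: lrot_le; exact: lrot_sub.
  have Hu : L (cs1 ++ c :: cs2) <= i by rewrite L_cat3; lia.
  have Hv : L (cs1 ++ c' :: cs2) <= i by rewrite L_cat3; lia.
  rewrite !lsplit_out // !rsplit_out //; split; exact: rt_refl.
Qed.


Lemma le_mono u v : le_PT u v -> forall i,
  le_PT (lsplit u i) (lsplit v i) /\ le_PT (rsplit u i) (rsplit v i).
Proof.
elim=> [x y H|x|x y z _ H1 _ H2] i; first exact: mono.
  by split; apply: rt_refl.
have [A1 B1] := H1 i; have [A2 B2] := H2 i; split; [exact: rt_trans A1 A2|exact: rt_trans B1 B2].
Qed.

Lemma wf_node cs : wf (Node cs) ->
  exists a c, [/\ cs = rcons a c, a <> [::], all wf a & wf c].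
Proof.
rewrite wfE => /andP[Hs Ha].
case/lastP: cs Hs Ha => [//|a c] Hs; rewrite all_rcons => /andP[Hc Ha].
exists a, c; split => //; case: a {Ha} Hs => //.
Qed.

Lemma wf_head c cs : wf (Node (c :: cs)) -> [/\ cs <> [::], wf c & all wf cs].
Proof. by rewrite wfE /= => /andP[H /andP[-> ->]]; split => //; case: cs H. Qed.

Lemma nleaves_pos x : wf x -> 0 < nleaves x.
Proof.
elim/ptree_ind2: x => // cs IH /wf_node [a [c [E Ha _ Hc]]]; subst cs.
rewrite nleavesE L_rcons; have := IH c; rewrite mem_rcons inE eqxx => /(_ isT Hc); lia.
Qed.

Lemma nleaves_leaf : nleaves Leaf = 1. Proof. by []. Qed.

Lemma gu_rcons a c t : graft_under (Node (rcons a c)) t = Node (rcons a (graft_under c t)).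
Proof. by elim: a => //= x a [->]; case: a. Qed.

Lemma gu_nleaves s t : wf s -> nleaves (graft_under s t) = nleaves s + nleaves t - 1.
Proof.
elim/ptree_ind2: s => [|cs IH]; first by move=> _; rewrite nleaves_leaf /=; lia.
move=> /wf_node [a [c [E Ha _ Hc]]]; subst cs.
have Hc' : c \in rcons a c by rewrite mem_rcons inE eqxx.
rewrite gu_rcons !nleavesE !L_rcons (IH c Hc' Hc); have := nleaves_pos Hc; lia.
Qed.

Lemma gu_ideg s t : wf s -> ideg (graft_under s t) = ideg s + ideg t.
Proof.
elim/ptree_ind2: s => [|cs IH] //.
move=> /wf_node [a [c [E Ha _ Hc]]]; subst cs.
have Hc' : c \in rcons a c by rewrite mem_rcons inE eqxx.
rewrite gu_rcons !idegE !psumn_rcons (IH c Hc' Hc); lia.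
Qed.

Lemma go_nleaves s t : wf t -> nleaves (graft_over s t) = nleaves s + nleaves t - 1.
Proof.
elim/ptree_ind2: t => [|cs IH]; first by move=> _; rewrite nleaves_leaf /=; lia.
case: cs IH => [|c cs] IH /=; first by rewrite wfE.
move=> /wf_head [_ Hc _].
rewrite !nleavesE /= IH ?inE ?eqxx //; have := nleaves_pos Hc; lia.
Qed.

Lemma ls_last x : wf x -> lsplit x (nleaves x).-1 = x.
Proof.
elim/ptree_ind2: x => [|cs IH] // /wf_node [a [c [E Ha _ Hc]]]; subst cs.
have Hc' : c \in rcons a c by rewrite mem_rcons inE eqxx.
have Hp := nleaves_pos Hc.
rewrite nleavesE L_rcons -cats1.
have -> : (L a + nleaves c).-1 = L a + (nleaves c).-1 by lia.
rewrite ls_cons //; last by lia.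
by rewrite IH // cats1.
Qed.

Lemma rs_last x : wf x -> rsplit x (nleaves x).-1 = Leaf.
Proof.
elim/ptree_ind2: x => [|cs IH] // /wf_node [a [c [E Ha _ Hc]]]; subst cs.
have Hc' : c \in rcons a c by rewrite mem_rcons inE eqxx.
have Hp := nleaves_pos Hc.
rewrite nleavesE L_rcons -cats1.
have -> : (L a + nleaves c).-1 = L a + (nleaves c).-1 by lia.
rewrite rs_nil //; last by lia.
by rewrite IH.
Qed.

Lemma ls_first x : wf x -> lsplit x 0 = Leaf.
Proof.
elim/ptree_ind2: x => [_|[|c cs] IH] //.
move=> /wf_head [_ Hc _]; rewrite ls_nil; last exact: nleaves_pos.
by apply: IH; rewrite ?inE ?eqxx.
Qed.

Lemma rs_first x : wf x -> rsplit x 0 = x.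
Proof.
elim/ptree_ind2: x => [_|[|c cs] IH] //.
move=> /wf_head [Hn Hc _]; rewrite rs_cons0 //; last exact: nleaves_pos.
by rewrite IH ?inE ?eqxx.
Qed.

Lemma gu_split s t : wf s -> wf t ->
  lsplit (graft_under s t) (nleaves s).-1 = s /\ rsplit (graft_under s t) (nleaves s).-1 = t.
Proof.
move=> Hs Ht; elim/ptree_ind2: s Hs => [|cs IH].
  by move=> _; rewrite /= ls_first // rs_first.
move=> /wf_node [a [c [E Ha _ Hc]]]; subst cs.
have Hc' : c \in rcons a c by rewrite mem_rcons inE eqxx.
have Hp := nleaves_pos Hc.
have Hq := nleaves_pos Ht.
rewrite gu_rcons nleavesE L_rcons -!cats1.
have -> : (L a + nleaves c).-1 = L a + (nleaves c).-1 by lia.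
have Hl : (nleaves c).-1 < nleaves (graft_under c t) by rewrite gu_nleaves //; lia.
rewrite ls_cons // rs_nil //.
have [-> ->] := IH c Hc' Hc.
by rewrite cats1.
Qed.

Lemma go_split s t : wf s -> wf t ->
  lsplit (graft_over s t) (nleaves s).-1 = s /\ rsplit (graft_over s t) (nleaves s).-1 = t.
Proof.
move=> Hs; elim/ptree_ind2: t => [|[|c cs] IH].
- by move=> _; rewrite /= ls_last // rs_last.
- by rewrite wfE.
move=> Ht; have [Hn Hc _] := wf_head Ht.
have Hp := nleaves_pos Hs.
have Hq := nleaves_pos Hc.
have Hl : (nleaves s).-1 < nleaves (graft_over s c) by rewrite go_nleaves //; lia.
rewrite /= ls_nil // rs_cons0 //.
by have [-> ->] := IH c (mem_head _ _) Hc.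
Qed.


Notation I cs := (sumn (map ideg cs)).

Lemma ideg_rcons a x : ideg (Node (rcons a x)) = (I a + ideg x).+1.
Proof. by rewrite idegE psumn_rcons. Qed.
Lemma ideg_cons x b : ideg (Node (x :: b)) = (ideg x + I b).+1.
Proof. by rewrite idegE. Qed.

Lemma ideg_ge r i : wf r -> i < nleaves r -> ideg r <= ideg (lsplit r i) + ideg (rsplit r i).
Proof.
elim/ptree_ind2: r i => [|cs IH] i; first by rewrite nleaves_leaf => _; case: i.
rewrite nleavesE => Hw Hi; have [a [c [b [j [E1 E2 E3]]]]] := decomp Hi; subst cs i; clear Hi.
have Hc : c \in a ++ c :: b by rewrite mem_cat mem_head orbT.
move: Hw; rewrite wfE all_cat /= => /andP[Hs /and3P[_ Hwc _]].
have := IH c Hc j Hwc E3.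
rewrite lsplit_dec // rsplit_dec // idegE psumn_cat3.
case: a {Hc IH} Hs => [|x a]; case: b => [|y b] //= _;
  rewrite ?ideg_rcons ?ideg_cons /= ?ideg_rcons ?psumn_rcons; lia.
Qed.

Lemma lemA t : wf t -> forall a s', a <> [::] ->
  le_PT (Node (rcons a (graft_over s' t))) (graft_over (Node (rcons a s')) t).
Proof.
elim/ptree_ind2: t => [|[|t1 ts] IH] Ht a s' Ha; first exact: rt_refl.
  by move: Ht; rewrite wfE.
have [Hn H1 _] := wf_head Ht.
rewrite /=.
apply: rt_trans (_ : le_PT _ (Node (Node (rcons a (graft_over s' t1)) :: ts))) _.
  exact: lrot_le (lrot_root _ _ _).
exact: (le_PT_ctx [::]) (IH t1 (mem_head _ _) H1 a s' Ha).
Qed.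

Lemma lemB s : wf s -> forall t' b, b <> [::] ->
  le_PT (graft_under s (Node (t' :: b))) (Node (graft_under s t' :: b)).
Proof.
elim/ptree_ind2: s => [|cs IH] Hs t' b Hb; first exact: rt_refl.
have [a [c [E Ha _ Hc]]] := wf_node Hs; subst cs.
have Hc' : c \in rcons a c by rewrite mem_rcons inE eqxx.
rewrite !gu_rcons.
apply: rt_trans (_ : le_PT _ (Node (rcons a (Node (graft_under c t' :: b))))) _.
  rewrite -!cats1; exact: le_PT_ctx (IH c Hc' Hc t' b Hb).
exact: lrot_le (lrot_root _ _ _).
Qed.

Lemma up r : wf r -> forall i s t, i < nleaves r -> allowable r i ->
  lsplit r i = s -> rsplit r i = t -> wf s -> wf t ->
  le_PT (graft_under s t) r /\ le_PT r (graft_over s t).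
Proof.
elim/ptree_ind2: r => [|cs IH] Hw i s t.
  rewrite nleaves_leaf; case: i => // _ _ <- <- _ _; split; exact: rt_refl.
rewrite nleavesE => Hi; have [a [c [b [j [E1 E2 E3]]]]] := decomp Hi; subst cs i; clear Hi.
have Hc : c \in a ++ c :: b by rewrite mem_cat mem_head orbT.
move: (Hw); rewrite wfE all_cat /= => /andP[Hs /and3P[_ Hwc _]].
have Hge := ideg_ge Hwc E3.
rewrite /allowable lsplit_dec // rsplit_dec // idegE psumn_cat3.
have IHc := IH c Hc Hwc; clear IH Hw Hc.
case: a Hs => [|x a]; case: b => [|y b] //= _.
-
  rewrite ?ideg_rcons ?ideg_cons /= => /eqP Hal Hls Hrs Hws Hwt.
  have Hal' : ideg (lsplit c j) + ideg (rsplit c j) == ideg c by apply/eqP; lia.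
  rewrite -Hrs in Hwt; have [_ Hwt' _] := wf_head Hwt.
  have [IH1 IH2] := IHc j _ _ E3 Hal' Hls erefl Hws Hwt'.
  subst t; split.
    exact: rt_trans (lemB Hws (rsplit c j) (b:=y :: b) ltac:(by [])) (le_PT_ctx [::] (y :: b) IH1).
  exact: (le_PT_ctx [::] (y :: b) IH2).
- move=> /eqP Hal Hls Hrs Hws Hwt; subst s t.
  have Hws' : wf (lsplit c j).
    by move: Hws; rewrite wfE -rcons_cons all_rcons => /andP[_ /andP[]].
  have Hal' : ideg (lsplit c j) + ideg (rsplit c j) == ideg c.
    by move: Hal; rewrite -rcons_cons ideg_rcons /=; lia.
  have [IH1 IH2] := IHc j _ _ E3 Hal' erefl erefl Hws' Hwt.
  rewrite -rcons_cons gu_rcons -cat_cons; split.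
    by rewrite -cats1; exact: (le_PT_ctx (x :: a) [::] IH1).
  apply: rt_trans (lemA Hwt (a:=x :: a) (lsplit c j) ltac:(by [])).
  by rewrite -cats1; exact: (le_PT_ctx (x :: a) [::] IH2).
- move=> /eqP; rewrite ?ideg_rcons ?ideg_cons /= ?psumn_rcons; lia.
Qed.


Lemma nl_lsplit r i : i < nleaves r -> nleaves (lsplit r i) = i.+1.
Proof.
elim/ptree_ind2: r i => [|cs IH] i; first by rewrite nleaves_leaf; case: i.
rewrite nleavesE => Hi; have [a [c [b [j [E1 E2 E3]]]]] := decomp Hi; subst cs i; clear Hi.
have Hc : c \in a ++ c :: b by rewrite mem_cat mem_head orbT.
have IHc := IH c Hc; clear IH Hc.
rewrite lsplit_dec //; case: a => [|x a] /=; first by rewrite IHc.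
rewrite nleavesE -rcons_cons L_rcons IHc //=; lia.
Qed.

Lemma count_single (P : pred nat) k n :
  (forall i, i < n -> P i -> i = k) -> count P (iota 0 n) = ((k < n) && P k).
Proof.
move=> H.
rewrite (@eq_in_count _ P (fun i => (i == k) && P k)); last first.
  move=> i; rewrite mem_iota add0n => /= Hi.
  case: (boolP (P i)) => Pi; first by have E := H i Hi Pi; subst i; rewrite eqxx Pi.
  by case: eqP => // E; subst i; rewrite (negbTE Pi).
case: (P k); rewrite ?andbT ?andbF.
  rewrite (@eq_count _ _ (pred1 k)); last by move=> i /=; rewrite andbT.
  by rewrite count_uniq_mem ?iota_uniq // mem_iota.
rewrite (@eq_count _ _ pred0); last by move=> i /=; rewrite andbF.
by rewrite count_pred0.
Qed.

Theorem mainTheorem3 (s t : ptree) :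
  wf s -> wf t ->
  forall r : ptree, wf r ->
    (le_PT (graft_under s t) r /\ le_PT r (graft_over s t) ->
       dual_prod_coeff s t r = 1) /\
    (~ (le_PT (graft_under s t) r /\ le_PT r (graft_over s t)) ->
       dual_prod_coeff s t r = 0).
Proof.
move=> Hs Ht r Hr.
set k := (nleaves s).-1.
have Hps := nleaves_pos Hs; have Hpt := nleaves_pos Ht; have Hpr := nleaves_pos Hr.
set P := fun i => [&& allowable r i, lsplit r i == s & rsplit r i == t].
have Ec : dual_prod_coeff s t r = ((k < (deg r).+1) && P k).
  rewrite /dual_prod_coeff -/P; apply: count_single => i Hi /and3P[_ /eqP Hl _].
  have := nl_lsplit (i := i) (r := r) ltac:(rewrite /deg in Hi; lia).
  rewrite Hl /k; lia.
have Hiff : (le_PT (graft_under s t) r /\ le_PT r (graft_over s t)) <-> ((k < (deg r).+1) && P k).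
  split.
    move=> [Hlo Hhi].
    have [_ En Ei] := le_PT_inv Hlo.
    have [l1 r1] := le_mono Hlo k; have [l2 r2] := le_mono Hhi k.
    have [g1 g2] := gu_split Hs Ht; have [h1 h2] := go_split Hs Ht.
    rewrite -/k in g1 g2 h1 h2.
    rewrite g1 in l1; rewrite h1 in l2; rewrite g2 in r1; rewrite h2 in r2.
    have El := le_PT_antisym l2 l1; have Er := le_PT_antisym r1 r2.
    apply/andP; split.
      rewrite /deg -En gu_nleaves // /k; lia.
    rewrite /P /allowable El -Er !eqxx -Ei gu_ideg // Er.
    by rewrite !eqxx.
  move=> /andP[Hk /and3P[Ha /eqP El /eqP Er]].
  apply: (up Hr (i := k)) => //.
  rewrite /deg in Hk; lia.
rewrite Ec; split.
  by move=> /Hiff ->.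
by move=> HN; case: ((k < (deg r).+1) && P k) Hiff => // -[_ /(_ isT)].
Qed.
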